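(* Fix a start pose $\mathbf{p}_0=(x_0,y_0,\theta_0)$ and CSC inputs $\mathbf{u}_i=(v_i,\omega_i)$, $i=1,2,3$ ($v_i>0$, $\omega_1\neq0$, $\omega_2=0$, $\omega_3\neq0$). A pose $\mathbf{p}_f=(x_f,y_f,\theta_f)$ is reachable from $\mathbf{p}_0$ by the CSC path with these inputs if and only if $$(x_f-c)^2+(y_f-d)^2\ \ge\ r_{31}^2,$$ where $c=x_0-r_1\sin\theta_0+r_3\sin\theta_f$ and $d=y_0+r_1\cos\theta_0-r_3\cos\theta_f$.
   Context: A pose is $\mathbf{p}=(x,y,\theta)$, heading understood modulo $2\pi$. An input is $\mathbf{u}=(v,\omega)$. The motion primitive $\mathrm{M}_{\mathbf{u},\tau}$ maps $(x,y,\theta)$ to: if $\omega\neq0$, $\big(x-\frac{v}{\omega}(\sin\theta-\sin(\theta+\omega\tau)),\ y+\frac{v}{\omega}(\cos\theta-\cos(\theta+\omega\tau)),\ \theta+\omega\tau\big)$; if $\omega=0$, $(x+v\tau\cos\theta,\ y+v\tau\sin\theta,\ \theta)$. For a fixed path type with fixed inputs $\mathbf{u}_1,\mathbf{u}_2,\mathbf{u}_3$, a pose $\mathbf{p}_f$ is reachable from $\mathbf{p}_0$ if there exist durations $\tau_1,\tau_2,\tau_3\ge0$, with $|\omega_i\tau_i|<2\pi$ for each turning segment, such that $\mathrm{M}_{\mathbf{u}_3,\tau_3}(\mathrm{M}_{\mathbf{u}_2,\tau_2}(\mathrm{M}_{\mathbf{u}_1,\tau_1}(\mathbf{p}_0)))$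 has position $(x_f,y_f)$ and heading congruent to $\theta_f$ modulo $2\pi$. Notation: $r_i=v_i/\omega_i$ for turning segments, $r_{31}=r_3-r_1$. *)

(* Defs.v *)
From Stdlib Require Import Reals Lra.
Open Scope R_scope.

Definition pose : Type := (R * R * R)%type.

Definition motion (v w tau : R) (p : pose) : pose :=
  let '(x, y, th) := p in
  if Req_EM_T w 0 then
    (x + v * tau * cos th, y + v * tau * sin th, th)
  else
    (x - v / w * (sin th - sin (th + w * tau)),
     y + v / w * (cos th - cos (th + w * tau)),
     th + w * tau).

Definition admissible (w tau : R) : Prop :=
  0 <= tau /\ (w <> 0 -> Rabs (w * tau) < 2 * PI).

Definition cong2pi (a b : R) : Prop := exists k : Z, a = b + 2 * PI * IZR k.

Definition reachable (v1 w1 v2 w2 v3 w3 : R) (p0 pf : pose) : Prop :=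
  exists t1 t2 t3 : R,
    admissible w1 t1 /\ admissible w2 t2 /\ admissible w3 t3 /\
    let '(x, y, th) := motion v3 w3 t3 (motion v2 w2 t2 (motion v1 w1 t1 p0)) in
    let '(xf, yf, thf) := pf in
    x = xf /\ y = yf /\ cong2pi th thf.

(* Main.v *)
Require Import Defs.
From Stdlib Require Import Reals.
From Stdlib Require Import Lra Lia ZArith.
Open Scope R_scope.

Lemma angle_unit (u v : R) : u*u + v*v = 1 -> exists t, cos t = u /\ sin t = v.
Proof.
  intros H.
  assert (Hb : -1 <= u <= 1) by nra.
  assert (Hs : sqrt (1 - u²) = Rabs v).
  { replace (1 - u²) with (v²) by (unfold Rsqr; lra). apply sqrt_Rsqr_abs. }
  destruct (Rle_dec 0 v) as [Hv|Hv].
  - exists (acos u). split; [now apply cos_acos|].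
    rewrite sin_acos by lra. rewrite Hs. apply Rabs_right; lra.
  - exists (- acos u). rewrite cos_neg, sin_neg. split; [now apply cos_acos|].
    rewrite sin_acos by lra. rewrite Hs. rewrite Rabs_left by lra. lra.
Qed.

Lemma angle_vec (p q L r : R) : p*p + q*q = L*L + r*r ->
  exists th, p = L * cos th - r * sin th /\ q = L * sin th + r * cos th.
Proof.
  intros H.
  set (rho := sqrt (p*p+q*q)).
  assert (Hr0 : 0 <= rho) by apply sqrt_pos.
  assert (Hrr : rho * rho = p*p+q*q) by (apply sqrt_sqrt; nra).
  destruct (Req_dec rho 0) as [Hz|Hz].
  - exists 0. rewrite Hz in Hrr.
    assert (p = 0) by nra. assert (q = 0) by nra.
    assert (L = 0) by nra. assert (r = 0) by nra. subst. lra.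
  - destruct (angle_unit (p/rho) (q/rho)) as [a [Ha1 Ha2]].
    { replace (p / rho * (p / rho) + q / rho * (q / rho)) with ((p*p+q*q)/(rho*rho)) by (field; exact Hz).
      rewrite <- Hrr. field. exact Hz. }
    destruct (angle_unit (L/rho) (r/rho)) as [b [Hb1 Hb2]].
    { replace (L / rho * (L / rho) + r / rho * (r / rho)) with ((L*L+r*r)/(rho*rho)) by (field; exact Hz).
      rewrite <- H, <- Hrr. field. exact Hz. }
    exists (a - b). rewrite cos_minus, sin_minus.
    assert (Ep : p = rho * cos a) by (rewrite Ha1; field; exact Hz).
    assert (Eq : q = rho * sin a) by (rewrite Ha2; field; exact Hz).
    assert (EL : L = rho * cos b) by (rewrite Hb1; field; exact Hz).
    assert (Er : r = rho * sin b) by (rewrite Hb2; field; exact Hz).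
    pose proof (sin2_cos2 b) as Hsc. unfold Rsqr in Hsc.
    rewrite Ep, Eq, EL, Er. split.
    + transitivity (rho * cos a * (sin b * sin b + cos b * cos b)); [rewrite Hsc; ring| ring].
    + transitivity (rho * sin a * (sin b * sin b + cos b * cos b)); [rewrite Hsc; ring| ring].
Qed.

Lemma periodN (x : R) (n : nat) :
  sin (x - 2 * INR n * PI) = sin x /\ cos (x - 2 * INR n * PI) = cos x.
Proof.
  split.
  - rewrite <- (sin_period (x - 2 * INR n * PI) n). f_equal. ring.
  - rewrite <- (cos_period (x - 2 * INR n * PI) n). f_equal. ring.
Qed.

Lemma periodZ (x : R) (k : Z) :
  sin (x + 2 * PI * IZR k) = sin x /\ cos (x + 2 * PI * IZR k) = cos x.
Proof.
  destruct k as [|p|p].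
  - simpl. replace (x + 2 * PI * 0) with x by ring. auto.
  - rewrite <- (positive_nat_Z p), <- (INR_IZR_INZ (Pos.to_nat p)).
    replace (x + 2 * PI * INR (Pos.to_nat p)) with (x + 2 * INR (Pos.to_nat p) * PI) by ring.
    split; [apply sin_period | apply cos_period].
  - replace (IZR (Z.neg p)) with (- IZR (Z.pos p)) by (rewrite <- opp_IZR; reflexivity).
    rewrite <- (positive_nat_Z p), <- (INR_IZR_INZ (Pos.to_nat p)).
    replace (x + 2 * PI * - INR (Pos.to_nat p)) with (x - 2 * INR (Pos.to_nat p) * PI) by ring.
    apply periodN.
Qed.

Lemma shift0 (a : R) : exists k : Z, 0 <= a + 2 * PI * IZR k < 2 * PI.
Proof.
  pose proof PI_RGT_0 as HPI.
  destruct (archimed (a / (2 * PI))) as [H1 H2].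
  exists (1 - up (a / (2 * PI)))%Z.
  rewrite minus_IZR.
  set (n := IZR (up (a / (2 * PI)))) in *.
  assert (Ha : a = (a / (2*PI)) * (2 * PI)) by (field; lra).
  split; nra.
Qed.

Lemma shift (w a : R) : w <> 0 -> exists (k : Z) (t : R),
  admissible w t /\ w * t = a + 2 * PI * IZR k.
Proof.
  intros Hw. pose proof PI_RGT_0 as HPI.
  destruct (Rlt_dec 0 w) as [Hp|Hn].
  - destruct (shift0 a) as [k Hk]. exists k, ((a + 2 * PI * IZR k) / w).
    split; [split|].
    + apply Rle_mult_inv_pos; lra.
    + intros _. replace (w * ((a + 2 * PI * IZR k) / w)) with (a + 2 * PI * IZR k) by (field; lra).
      rewrite Rabs_right; lra.
    + field; lra.
  - destruct (shift0 (-a)) as [k Hk]. exists (- k)%Z, ((a + 2 * PI * IZR (-k)) / w).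
    rewrite opp_IZR in *.
    split; [split|].
    + replace ((a + 2 * PI * - IZR k) / w) with ((-a + 2 * PI * IZR k) / (- w)) by (field; lra).
      apply Rle_mult_inv_pos; lra.
    + intros _. replace (w * ((a + 2 * PI * - IZR k) / w)) with (a + 2 * PI * - IZR k) by (field; lra).
      rewrite Rabs_left1; lra.
    + field; lra.
Qed.

Theorem theorem1 :
  forall (x0 y0 th0 v1 w1 v2 w2 v3 w3 xf yf thf : R),
    0 < v1 -> 0 < v2 -> 0 < v3 ->
    w1 <> 0 -> w2 = 0 -> w3 <> 0 ->
    let r1 := v1 / w1 in
    let r3 := v3 / w3 in
    let c := x0 - r1 * sin th0 + r3 * sin thf in
    let d := y0 + r1 * cos th0 - r3 * cos thf in
    (reachable v1 w1 v2 w2 v3 w3 (x0, y0, th0) (xf, yf, thf) <->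
     (xf - c) ^ 2 + (yf - d) ^ 2 >= (r3 - r1) ^ 2).
Proof.
  intros x0 y0 th0 v1 w1 v2 w2 v3 w3 xf yf thf Hv1 Hv2 Hv3 Hw1 Hw2 Hw3.
  cbv zeta. subst w2. unfold reachable, motion.
  destruct (Req_EM_T w1 0); [contradiction|].
  destruct (Req_EM_T 0 0); [|contradiction].
  destruct (Req_EM_T w3 0); [contradiction|].
  split.
  - intros [t1 [t2 [t3 [A1 [A2 [A3 [Ex [Ey [k Ek]]]]]]]]].
    set (th1 := th0 + w1 * t1) in *.
    assert (Hf : th1 + w3 * t3 = thf + 2 * PI * IZR k) by exact Ek.
    destruct (periodZ thf k) as [Ps Pc].
    rewrite <- Hf in Ps, Pc. rewrite Ps in Ex. rewrite Pc in Ey.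
    rewrite <- Ex, <- Ey.
    set (S := sin th1) in *. set (C := cos th1) in *.
    pose proof (sin2_cos2 th1) as Hsc. unfold Rsqr in Hsc. fold S C in Hsc.
    set (L := v2 * t2).
    set (R0 := v3 / w3 - v1 / w1).
    assert (E : (x0 - v1 / w1 * (sin th0 - S) + L * C - v3 / w3 * (S - sin thf) -
      (x0 - v1 / w1 * sin th0 + v3 / w3 * sin thf)) ^ 2 +
     (y0 + v1 / w1 * (cos th0 - C) + L * S + v3 / w3 * (C - cos thf) -
      (y0 + v1 / w1 * cos th0 - v3 / w3 * cos thf)) ^ 2
      = (R0 * R0 + L * L) * (S * S + C * C)) by (unfold R0; ring).
    rewrite E, Hsc. unfold R0. nra.
  - intros H.
    set (p := xf - (x0 - v1 / w1 * sin th0 + v3 / w3 * sin thf)) in *.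
    set (q := yf - (y0 + v1 / w1 * cos th0 - v3 / w3 * cos thf)) in *.
    set (R0 := v3 / w3 - v1 / w1) in *.
    set (L := sqrt (p ^ 2 + q ^ 2 - R0 ^ 2)).
    assert (HL0 : 0 <= L) by apply sqrt_pos.
    assert (HLL : L * L = p ^ 2 + q ^ 2 - R0 ^ 2) by (apply sqrt_sqrt; lra).
    destruct (angle_vec p q L R0) as [th1 [Hp Hq]]; [nra|].
    destruct (shift w1 (th1 - th0) Hw1) as [k1 [t1 [A1 E1]]].
    destruct (shift w3 (thf - (th0 + w1 * t1)) Hw3) as [k3 [t3 [A3 E3]]].
    exists t1, (L / v2), t3.
    split; [exact A1|]. split.
    { split; [apply Rle_mult_inv_pos; lra| intros []; reflexivity]. }
    split; [exact A3|].
    assert (F1 : th0 + w1 * t1 = th1 + 2 * PI * IZR k1) by lra.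
    assert (F3 : th0 + w1 * t1 + w3 * t3 = thf + 2 * PI * IZR k3) by lra.
    destruct (periodZ th1 k1) as [S1 C1].
    destruct (periodZ thf k3) as [S3 C3].
    rewrite F3, S3, C3, F1, S1, C1.
    split; [|split].
    + assert (xf = p + (x0 - v1 / w1 * sin th0 + v3 / w3 * sin thf)) by (unfold p; ring).
      rewrite H0, Hp. unfold R0. field. lra.
    + assert (yf = q + (y0 + v1 / w1 * cos th0 - v3 / w3 * cos thf)) by (unfold q; ring).
      rewrite H0, Hq. unfold R0. field. lra.
    + exists k3. reflexivity.
Qed.
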